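(* For all real numbers $x,y$ with $1 \leqslant y \leqslant x$, \[ \frac{-N(x)}{x}=\sum_{k \leqslant y} \frac{\Lambda(k)}{k} \frac{M(x/k)}{x/k}+\sum_{j \leqslant x/y} \frac{\mu(j)}{j} \frac{\psi(x/j)-x/j}{x/j}-\frac{\psi(y)-y}{y}\frac{M(x/y)}{x/y}+m_1(x/y). \]
   Context: $\mu$ is the Möbius function and $\Lambda$ the von Mangoldt function ($\Lambda(n)=\log p$ if $n=p^k$ with $p$ prime and $k\geqslant 1$, else $0$). For real $x>0$: $M(x)=\sum_{n\leqslant x}\mu(n)$, $m(x)=\sum_{n\leqslant x}\mu(n)/n$, $m_1(x)=m(x)-M(x)/x=\sum_{n\leqslant x}\frac{\mu(n)}{n}(1-n/x)$, $N(x)=\sum_{n\leqslant x}\mu(n)\log n$, $\psi(x)=\sum_{n\leqslant x}\Lambda(n)$. Sums run over positive integers. *)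

(* Defs.v *)
From Stdlib Require Import Reals ZArith.
From mathcomp Require Import ssreflect ssrbool eqtype ssrnat seq prime.
Open Scope R_scope.

(* floor of a real number, as a nat (0 for negative reals) *)
Definition nfloor (x : R) : nat := Z.to_nat (Int_part x).

Definition sum_le (x : R) (f : nat -> R) : R :=
  foldr Rplus 0 (map f (iota 1 (nfloor x))).

(* Moebius function: 0 at 0 (never used), (-1)^omega(n) if n squarefree, else 0 *)
Definition mu (n : nat) : R :=
  if n == 0%nat then 0
  else if all (fun p => logn p n == 1%nat) (primes n)
       then (-1) ^ size (primes n) else 0.

(* von Mangoldt function: log p if n = p^k, k >= 1, p prime; else 0 *)
Definition Lambda (n : nat) : R :=
  match primes n with
  | [:: p] => ln (INR p)
  | _ => 0
  end.

Definition Mmu (x : R) : R := sum_le x mu.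
Definition mmu (x : R) : R := sum_le x (fun n => mu n / INR n).
Definition m1 (x : R) : R := mmu x - Mmu x / x.
Definition Nmu (x : R) : R := sum_le x (fun n => mu n * ln (INR n)).
Definition psi (x : R) : R := sum_le x Lambda.

(* Main.v *)
From HB Require Import structures.
From Stdlib Require Import Reals Lra Lia ZArith.
From mathcomp Require Import ssreflect ssrfun ssrbool eqtype ssrnat seq path div fintype bigop prime.
From mathcomp Require Import zify.
Require Import Defs.
Open Scope R_scope.

Lemma mu_pow (p m c : nat) : prime p -> coprime p m -> (0 < m)%N ->
  mu (m * p ^ c) = if c == 0%N then mu m else if c == 1%N then - mu m else 0.
Proof.
move=> pp cpm m0.
case: c => [|c]; first by rewrite expn0 muln1.
have pc0 : (0 < p ^ c.+1)%N by rewrite expn_gt0 prime_gt0.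
have pm : p \notin primes m by rewrite mem_primes pp m0 /= -prime_coprime.
have n0 : (0 < m * p ^ c.+1)%N by rewrite muln_gt0 m0.
have Hmem : primes (m * p ^ c.+1) =i p :: primes m.
  move=> q; rewrite primesM // primesX // (primes_prime pp).
  by rewrite !in_cons in_nil orbF orbC.
have Hsz : size (primes (m * p ^ c.+1)) = (size (primes m)).+1.
  rewrite (perm_size (uniq_perm (primes_uniq _) _ Hmem)) //=.
  by rewrite pm primes_uniq.
have Hall : all (fun q => logn q (m * p ^ c.+1) == 1%N) (primes (m * p ^ c.+1))
   = (c == 0%N) && all (fun q => logn q m == 1%N) (primes m).
  rewrite (eq_all_r Hmem) /= lognM // lognX (logn_prime _ pp) eqxx muln1.
  rewrite (logn_coprime cpm) add0n eqSS; congr andb.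
  apply: eq_in_all => q qm; rewrite lognM // lognX (logn_prime _ pp).
  have -> : (q == p) = false by apply/eqP => E; move: pm; rewrite -E qm.
  by rewrite muln0 addn0.
rewrite /mu (negPf (lt0n_neq0 n0)) (negPf (lt0n_neq0 m0)) Hall Hsz /=.
clear -pp; case: c => [|c] /=.
  case: (all _ _) => //; lra.
by [].
Qed.

Lemma RplusA : associative Rplus.
Proof. by move=> a b c; rewrite Rplus_assoc. Qed.
HB.instance Definition _ := Monoid.isComLaw.Build R 0 Rplus RplusA Rplus_comm Rplus_0_l.

Lemma prime_sum (p n : nat) : prime p -> (0 < n)%N -> p \in primes n ->
  \big[Rplus/0]_(a <- iota 1 (logn p n)) mu (n %/ p ^ a) = - INR (logn p n) * mu n.
Proof.
move=> pp n0 pn.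
have [m cpm En] := pfactor_coprime pp n0.
move: pn; rewrite -logn_gt0.
set v := logn p n in En *.
have m0 : (0 < m)%N by move: n0; rewrite En muln_gt0 => /andP[].
move=> v0.
rewrite (eq_big_seq (fun a => mu (m * p ^ (v - a)))); last first.
  move=> a; rewrite mem_iota => /andP[a1 a2].
  have -> : n = (m * p ^ (v - a) * p ^ a)%N.
    by rewrite -mulnA -expnD subnK // -ltnS -[(a.+1)%N]add1n.
  by rewrite mulnK // expn_gt0 prime_gt0.
rewrite En mu_pow //.
rewrite (eq_big_seq (fun a => if (v - a)%N == 0%N then mu m else if (v - a)%N == 1%N then - mu m else 0)); last first.
  by move=> a _; rewrite mu_pow.
clear En n0.
case: v v0 => [|[|w]] // _.
  by rewrite /= big_cons big_nil /=; lra.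
rewrite -[(w.+2)%N]addn2 iotaD big_cat /= !big_cons big_nil.
rewrite big1_seq; last first.
  move=> a /andP[_]; rewrite mem_iota => /andP[a1 a2].
  have H : (2 <= w + 2 - a)%N by lia.
  have -> : ((w + 2 - a)%N == 0%N) = false by apply/negbTE; rewrite -lt0n; apply: leq_trans H.
  have -> : ((w + 2 - a)%N == 1%N) = false by apply/negbTE; rewrite neq_ltn H orbT.
  by [].
have -> : (w + 2 - (1 + w))%N = 1%N by lia.
have -> : (w + 2 - (1 + w).+1)%N = 0%N by lia.
have -> : (w + 2 == 0)%N = false by apply/eqP; lia.
have -> : (w + 2 == 1)%N = false by apply/eqP; lia.
simpl; lra.
Qed.

Lemma collapse (s : seq nat) (c : nat) (F : nat -> R) : uniq s ->
  \big[Rplus/0]_(i <- s) (if i == c then F i else 0) = if c \in s then F c else 0.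
Proof.
elim: s => [|a s IH] /=; first by rewrite big_nil.
move=> /andP[nas us]; rewrite big_cons IH // in_cons.
case: (eqVneq a c) => [<-|ac] /=.
  by rewrite (negPf nas); lra.
lra.
Qed.

Lemma INR_expn (p e : nat) : INR (p ^ e)%N = INR p ^ e.
Proof.
elim: e => [|e IH]; first by rewrite expn0.
by rewrite expnS mult_INR IH.
Qed.

Lemma prod_pos (s : seq nat) (e : nat -> nat) : all (fun p => (0 < p)%N) s ->
  (0 < \prod_(p <- s) p ^ e p)%N.
Proof.
elim: s => [|a s IH] /=; first by rewrite big_nil.
by move=> /andP[a0 s0]; rewrite big_cons muln_gt0 expn_gt0 a0 IH.
Qed.

Lemma ln_prod (s : seq nat) (e : nat -> nat) : all (fun p => (0 < p)%N) s ->
  ln (INR (\prod_(p <- s) p ^ e p)%N) = \big[Rplus/0]_(p <- s) (INR (e p) * ln (INR p)).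
Proof.
elim: s => [|a s IH] /=; first by rewrite !big_nil /= ln_1.
move=> /andP[a0 s0]; rewrite !big_cons mult_INR ln_mult.
- by rewrite INR_expn ln_pow ?IH //; apply: lt_0_INR; apply/ltP.
- by rewrite INR_expn; apply: pow_lt; apply: lt_0_INR; apply/ltP.
- by apply: lt_0_INR; apply/ltP; apply: prod_pos.
Qed.

Lemma ln_decomp (n : nat) : (0 < n)%N ->
  ln (INR n) = \big[Rplus/0]_(p <- primes n) (INR (logn p n) * ln (INR p)).
Proof.
move=> n0; rewrite {1}(prod_prime_decomp n0) prime_decompE big_map /=.
rewrite (ln_prod _ (fun p => logn p n)) //.
by apply/allP => p; rewrite mem_primes => /andP[/prime_gt0].
Qed.

Lemma prime_pow_eq (k : nat) (q : nat) : primes k = [:: q] -> (0 < k)%N ->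
  prime q /\ k = (q ^ logn q k)%N /\ (0 < logn q k)%N.
Proof.
move=> E k0.
have qk : q \in primes k by rewrite E mem_seq1.
split; first by move: qk; rewrite mem_primes => /andP[].
split; last by rewrite logn_gt0.
by rewrite {1}(prod_prime_decomp k0) prime_decompE E /= big_cons big_nil muln1.
Qed.

Lemma lam_point (n k : nat) : (0 < n)%N -> (0 < k)%N ->
  (if k %| n then Lambda k * mu (n %/ k) else 0) =
  \big[Rplus/0]_(p <- primes n) \big[Rplus/0]_(a <- iota 1 (logn p n))
     (if k == (p ^ a)%N then ln (INR p) * mu (n %/ p ^ a) else 0).
Proof.
move=> n0 k0.
rewrite /Lambda.
case E: (primes k) => [|q [|r s]].
2: {
  have [qp [Ek b0]] := prime_pow_eq _ _ E k0.
  set b := logn q k in Ek b0.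
  rewrite (eq_big_seq (fun p => if p == q then
      \big[Rplus/0]_(a <- iota 1 (logn p n)) (if a == b then ln (INR p) * mu (n %/ p ^ a) else 0) else 0)); last first.
    move=> p; rewrite mem_primes => /andP[pp _].
    case: (eqVneq p q) => [->|pq].
      apply: eq_big_seq => a _; rewrite Ek eqn_exp2l ?prime_gt1 //.
      by rewrite eq_sym; case: (a == b) => //.
    apply: big1_seq => a /andP[_]; rewrite mem_iota => /andP[a1 _].
    case: eqP => // Eka; exfalso; move: E; rewrite Eka primesX // primes_prime //.
    by case => /eqP; rewrite (negPf pq).
  rewrite (collapse _ _ (fun p => \big[Rplus/0]_(a <- iota 1 (logn p n)) (if a == b then ln (INR p) * mu (n %/ p ^ a) else 0))) ?primes_uniq //.
  rewrite collapse ?iota_uniq // mem_iota.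
  rewrite Ek pfactor_dvdn // mem_primes qp n0 /= -Ek.
  case: (boolP (b <= logn q n)%N) => bL.
    have -> : (q %| n) by rewrite -[q]expn1 pfactor_dvdn //; apply: leq_trans bL.
    rewrite b0 /=.
    by rewrite add1n ltnS bL.
  by case: (q %| n); rewrite //= b0 /= add1n ltnS (negPf bL).
}
all: rewrite big1_seq; [by case: (k %| n) => //; lra|].
all: move=> p /andP[_]; rewrite mem_primes => /andP[pp _].
all: rewrite big1_seq //.
all: move=> a /andP[_]; rewrite mem_iota => /andP[a1 _].
all: case: eqP => // Eka; exfalso; move: E; rewrite Eka primesX // primes_prime //.
Qed.

Lemma rsum_mull (T : Type) (s : seq T) (c : R) (F : T -> R) :
  c * \big[Rplus/0]_(i <- s) F i = \big[Rplus/0]_(i <- s) (c * F i).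
Proof.
elim: s => [|a s IH]; first by rewrite !big_nil; ring.
by rewrite !big_cons -IH; ring.
Qed.

Lemma rsum_ext (T : eqType) (s : seq T) (F G : T -> R) :
  (forall i, i \in s -> F i = G i) ->
  \big[Rplus/0]_(i <- s) F i = \big[Rplus/0]_(i <- s) G i.
Proof. by move=> H; apply: eq_big_seq. Qed.

Lemma conv_point (n X : nat) : (0 < n)%N -> (n <= X)%N ->
  \big[Rplus/0]_(k <- iota 1 X) \big[Rplus/0]_(j <- iota 1 X)
     (if (k * j == n)%N then Lambda k * mu j else 0) = - mu n * ln (INR n).
Proof.
move=> n0 nX.
rewrite (rsum_ext _ _ _ (fun k => if k %| n then Lambda k * mu (n %/ k) else 0)); last first.
  move=> k; rewrite mem_iota => /andP[k1 _].
  rewrite (rsum_ext _ _ _ (fun j => if j == n %/ k then (if k %| n then Lambda k * mu j else 0) else 0)); last first.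
    move=> j _.
    case: (boolP (k %| n)) => kn.
      have -> : (k * j == n)%N = (j == n %/ k).
        by rewrite -{1}(divnK kn) mulnC eqn_pmul2r.
      by [].
    have -> : (k * j == n)%N = false by apply/negbTE; apply: contra kn => /eqP <-; rewrite dvdn_mulr.
    by case: (_ == _).
  rewrite collapse ?iota_uniq // mem_iota.
  case: (boolP (k %| n)) => kn; last by case: (_ && _).
  have -> : (1 <= n %/ k < 1 + X)%N; last by [].
  apply/andP; split; first by rewrite divn_gt0 // dvdn_leq.
  by rewrite add1n ltnS; apply: leq_trans (leq_div _ _) nX.
rewrite (rsum_ext _ _ _ (fun k => \big[Rplus/0]_(p <- primes n) \big[Rplus/0]_(a <- iota 1 (logn p n))
     (if k == (p ^ a)%N then ln (INR p) * mu (n %/ p ^ a) else 0))); last first.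
  by move=> k; rewrite mem_iota => /andP[k1 _]; apply: lam_point.
rewrite exchange_big /=.
rewrite (rsum_ext _ _ _ (fun p => ln (INR p) * (- INR (logn p n) * mu n))); last first.
  move=> p pn; have pp : prime p by move: pn; rewrite mem_primes => /andP[].
  rewrite exchange_big /= -prime_sum //.
  rewrite rsum_mull; apply: rsum_ext => a; rewrite mem_iota => /andP[a1 a2].
  rewrite (collapse _ _ (fun _ => ln (INR p) * mu (n %/ p ^ a))) ?iota_uniq // mem_iota.
  have pa : (p ^ a %| n)%N.
    by rewrite pfactor_dvdn //; move: a2; rewrite add1n ltnS.
  have -> : (1 <= p ^ a < 1 + X)%N; last by [].
  apply/andP; split; first by rewrite expn_gt0 prime_gt0.
  by rewrite add1n ltnS; apply: leq_trans (dvdn_leq n0 pa) nX.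
rewrite ln_decomp // rsum_mull; apply: rsum_ext => p _; ring.
Qed.

Definition ind (b : bool) : R := if b then 1 else 0.

Lemma nfloor_le (z : R) (n : nat) : 0 <= z -> (n <= nfloor z)%N <-> INR n <= z.
Proof.
move=> z0; rewrite /nfloor.
have [H1 H2] := base_Int_part z.
set I := Int_part z in H1 H2 *.
have I0 : (0 <= I)%Z.
  have : (-1 < I)%Z by apply: lt_IZR; rewrite /=; lra.
  lia.
split.
- move=> /leP H.
  have : (Z.of_nat n <= I)%Z by lia.
  move=> /IZR_le; rewrite -INR_IZR_INZ; lra.
- move=> H; apply/leP.
  have : (Z.of_nat n < I + 1)%Z.
    apply: lt_IZR; rewrite -INR_IZR_INZ plus_IZR /=; lra.
  lia.
Qed.

Lemma sum_le_big (z : R) (f : nat -> R) :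
  sum_le z f = \big[Rplus/0]_(i <- iota 1 (nfloor z)) f i.
Proof.
rewrite /sum_le; elim: (iota 1 (nfloor z)) => [|a s IH] /=; first by rewrite big_nil.
by rewrite big_cons IH.
Qed.

Lemma nfloor_mono (z w : R) : 0 <= z -> z <= w -> (nfloor z <= nfloor w)%N.
Proof.
move=> z0 zw; apply/nfloor_le; first lra.
have := (proj1 (nfloor_le z (nfloor z) z0) (leqnn _)); lra.
Qed.

Lemma sum_le_X (z : R) (X : nat) (f : nat -> R) : 0 <= z -> (nfloor z <= X)%N ->
  sum_le z f = \big[Rplus/0]_(i <- iota 1 X) (ind (i <= nfloor z)%N * f i).
Proof.
move=> z0 zX; rewrite sum_le_big -(subnKC zX) iotaD big_cat /=.
have -> : \big[Rplus/0]_(i <- iota 1 (nfloor z)) (ind (i <= nfloor z)%N * f i) =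
          \big[Rplus/0]_(i <- iota 1 (nfloor z)) f i.
  apply: rsum_ext => i; rewrite mem_iota add1n ltnS => /andP[_ H].
  by rewrite H /ind Rmult_1_l.
have -> : \big[Rplus/0]_(i <- iota (1 + nfloor z) (X - nfloor z)) (ind (i <= nfloor z)%N * f i) = 0.
  apply: big1_seq => i /andP[_]; rewrite mem_iota => /andP[h _].
  have -> : (i <= nfloor z)%N = false by apply/negbTE; rewrite -ltnNge; apply: leq_trans h; rewrite add1n.
  by rewrite /ind Rmult_0_l.
by rewrite Rplus_0_r.
Qed.

Lemma le_div_iff (a b c : R) : 0 < a -> (b <= c / a <-> a * b <= c).
Proof.
move=> a0; split => H.
- have -> : c = a * (c / a) by field; lra.
  by apply: Rmult_le_compat_l; lra.
- have -> : b = (a * b) / a by field; lra.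
  apply: Rmult_le_compat_r => //; left; apply: Rinv_0_lt_compat; lra.
Qed.

Lemma INR_pos (k : nat) : (0 < k)%N -> 0 < INR k.
Proof. by move=> k0; apply: lt_0_INR; apply/ltP. Qed.

Lemma cond_div (x : R) (k j : nat) : 0 <= x -> (0 < k)%N ->
  (j <= nfloor (x / INR k))%N = (k * j <= nfloor x)%N.
Proof.
move=> x0 k0; have kp := INR_pos _ k0.
have xk : 0 <= x / INR k by apply: Rle_mult_inv_pos.
apply/idP/idP => H.
- apply/nfloor_le => //; rewrite mult_INR; apply/le_div_iff => //.
  by apply/nfloor_le.
- apply/nfloor_le => //; apply/le_div_iff => //; rewrite -mult_INR.
  by apply/nfloor_le.
Qed.

Lemma hyp (x y : R) (k j : nat) : 1 <= y -> y <= x -> (0 < k)%N -> (0 < j)%N ->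
  ind (k * j <= nfloor x)%N =
  ind (k <= nfloor y)%N * ind (k * j <= nfloor x)%N
  + ind (j <= nfloor (x / y))%N * ind (k * j <= nfloor x)%N
  - ind (k <= nfloor y)%N * ind (j <= nfloor (x / y))%N.
Proof.
move=> y1 yx k0 j0.
have kp := INR_pos _ k0; have jp := INR_pos _ j0.
have jge1 : 1 <= INR j by apply: (le_INR 1); apply/leP.
have x0 : 0 <= x by lra.
have xy0 : 0 <= x / y by apply: Rle_mult_inv_pos; lra.
have e1 : (k <= nfloor y)%N <-> INR k <= y by apply: nfloor_le; lra.
have e2 : (j <= nfloor (x / y))%N <-> y * INR j <= x.
  by rewrite -le_div_iff; [apply: nfloor_le | lra].
have e3 : (k * j <= nfloor x)%N <-> INR k * INR j <= x by rewrite -mult_INR; apply: nfloor_le.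
have c1 : (k <= nfloor y)%N && (j <= nfloor (x / y))%N -> (k * j <= nfloor x)%N.
  move=> /andP[/e1 h1 /e2 h2]; apply/e3; nra.
have c2 : (k * j <= nfloor x)%N -> (k <= nfloor y)%N || (j <= nfloor (x / y))%N.
  move=> /e3 h3; apply/orP; case: (boolP (k <= nfloor y)%N) => h1; first by left.
  right; apply/e2.
  have : ~ INR k <= y by move=> /e1 h; rewrite h in h1.
  nra.
move: c1 c2.
case: (k <= nfloor y)%N; case: (j <= nfloor (x / y))%N; case: (k * j <= nfloor x)%N => c1 c2;
  try (by move: (c1 isT)); try (by move: (c2 isT)); rewrite /ind; ring.
Qed.

Lemma rsumDB (T : Type) (s : seq T) (f g h : T -> R) :
  \big[Rplus/0]_(i <- s) f i + \big[Rplus/0]_(i <- s) g i - \big[Rplus/0]_(i <- s) h i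
  = \big[Rplus/0]_(i <- s) (f i + g i - h i).
Proof.
elim: s => [|a s IH]; first by rewrite !big_nil; ring.
by rewrite !big_cons -IH; ring.
Qed.

Lemma rsumB (T : Type) (s : seq T) (f g : T -> R) :
  \big[Rplus/0]_(i <- s) f i - \big[Rplus/0]_(i <- s) g i
  = \big[Rplus/0]_(i <- s) (f i - g i).
Proof.
elim: s => [|a s IH]; first by rewrite !big_nil; ring.
by rewrite !big_cons -IH; ring.
Qed.

Lemma rsum_mulr (T : Type) (s : seq T) (c : R) (F : T -> R) :
  \big[Rplus/0]_(i <- s) F i * c = \big[Rplus/0]_(i <- s) (F i * c).
Proof.
elim: s => [|a s IH]; first by rewrite !big_nil; ring.
by rewrite !big_cons -IH; ring.
Qed.

Lemma rsumN (T : Type) (s : seq T) (f : T -> R) :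
  - (\big[Rplus/0]_(i <- s) f i) = \big[Rplus/0]_(i <- s) (- f i).
Proof.
elim: s => [|a s IH]; first by rewrite !big_nil; ring.
by rewrite !big_cons -IH; ring.
Qed.

Lemma div_le (x a : R) : 0 <= x -> 1 <= a -> x / a <= x.
Proof.
move=> x0 a1.
have h : /a <= 1 by rewrite -Rinv_1; apply: Rinv_le_contravar; lra.
have h0 : 0 < /a by apply: Rinv_0_lt_compat; lra.
rewrite /Rdiv; nra.
Qed.

Theorem mainTheorem3 (x y : R) (hy1 : 1 <= y) (hyx : y <= x) :
  - Nmu x / x =
    sum_le y (fun k => Lambda k / INR k * (Mmu (x / INR k) / (x / INR k)))
  + sum_le (x / y) (fun j => mu j / INR j * ((psi (x / INR j) - x / INR j) / (x / INR j)))
  - (psi y - y) / y * (Mmu (x / y) / (x / y))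
  + m1 (x / y).
Proof.
have x0 : 0 < x by lra.
have y0 : 0 < y by lra.
have xle : 0 <= x by lra.
have yle : 0 <= y by lra.
have xy0 : 0 <= x / y by apply: Rle_mult_inv_pos.
have xyx : x / y <= x by apply: div_le.
set X := nfloor x.
have ZX : (nfloor (x / y) <= X)%N by apply: nfloor_mono.
have YX : (nfloor y <= X)%N by apply: nfloor_mono; lra.
have xk : forall k : nat, (0 < k)%N -> 0 <= x / INR k /\ (nfloor (x / INR k) <= X)%N.
  move=> k k0; have kp := INR_pos _ k0.
  have k1 : 1 <= INR k by apply: (le_INR 1); apply/leP.
  have h : 0 <= x / INR k by apply: Rle_mult_inv_pos.
  split => //; apply: nfloor_mono => //; apply: div_le => //.
set Y := nfloor y.
set Z := nfloor (x / y).
set S1 := \big[Rplus/0]_(k <- iota 1 X) \big[Rplus/0]_(j <- iota 1 X)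
           (ind (k <= Y)%N * ind (k * j <= X)%N * (Lambda k * mu j)).
set S2 := \big[Rplus/0]_(k <- iota 1 X) \big[Rplus/0]_(j <- iota 1 X)
           (ind (j <= Z)%N * ind (k * j <= X)%N * (Lambda k * mu j)).
set S3 := \big[Rplus/0]_(k <- iota 1 X) \big[Rplus/0]_(j <- iota 1 X)
           (ind (k <= Y)%N * ind (j <= Z)%N * (Lambda k * mu j)).
set S := \big[Rplus/0]_(k <- iota 1 X) \big[Rplus/0]_(j <- iota 1 X)
           (ind (k * j <= X)%N * (Lambda k * mu j)).
set mj := \big[Rplus/0]_(j <- iota 1 X) (ind (j <= Z)%N * (mu j / INR j)).
have HS : - Nmu x = S.
  rewrite /Nmu sum_le_big -/X rsumN.
  rewrite (rsum_ext _ _ _ (fun n => \big[Rplus/0]_(k <- iota 1 X) \big[Rplus/0]_(j <- iota 1 X)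
     (if (k * j == n)%N then Lambda k * mu j else 0))); last first.
    move=> n; rewrite mem_iota add1n ltnS => /andP[n0 nX]; rewrite conv_point //; ring.
  rewrite exchange_big /=; apply: rsum_ext => k; rewrite mem_iota => /andP[k0 _].
  rewrite exchange_big /=; apply: rsum_ext => j; rewrite mem_iota => /andP[j0 _].
  rewrite (rsum_ext _ _ _ (fun n => if n == (k*j)%N then Lambda k * mu j else 0)); last by move=> n _; rewrite eq_sym.
  rewrite (collapse _ _ (fun _ => Lambda k * mu j)) ?iota_uniq // mem_iota add1n ltnS muln_gt0 k0 j0 /=.
  by rewrite /ind; case: (_ <= _)%N; ring.
have H1 : sum_le y (fun k => Lambda k / INR k * (Mmu (x / INR k) / (x / INR k))) = S1 / x.
  have -> : S1 / x = / x * S1 by field; lra.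
  rewrite (sum_le_X _ X) // -/Y /S1 rsum_mull.
  apply: rsum_ext => k; rewrite mem_iota => /andP[k0 _].
  have [hk1 hk2] := xk k k0.
  have kp := INR_pos _ k0.
  rewrite /Mmu (sum_le_X _ X) //.
  rewrite (rsum_ext _ _ _ (fun j => ind (k * j <= X)%N * mu j)); last by move=> j _; rewrite cond_div.
  rewrite (rsum_ext _ _ (fun j => ind (k <= Y)%N * ind (k * j <= X)%N * (Lambda k * mu j)) (fun j => (ind (k <= Y)%N * Lambda k) * (ind (k * j <= X)%N * mu j))); last by move=> j _; ring.
  rewrite -rsum_mull; field; lra.
have H2 : sum_le (x / y) (fun j => mu j / INR j * ((psi (x / INR j) - x / INR j) / (x / INR j)))
   = S2 / x - mj.
  rewrite (sum_le_X _ X) // -/Z.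
  rewrite (rsum_ext _ _ _ (fun j => / x * \big[Rplus/0]_(k <- iota 1 X)
           (ind (j <= Z)%N * ind (k * j <= X)%N * (Lambda k * mu j)) - ind (j <= Z)%N * (mu j / INR j))); last first.
    move=> j; rewrite mem_iota => /andP[j0 _].
    have [hk1 hk2] := xk j j0.
    have jp := INR_pos _ j0.
    rewrite /psi (sum_le_X _ X) //.
    rewrite (rsum_ext _ _ _ (fun k => ind (k * j <= X)%N * Lambda k)); last by move=> k _; rewrite cond_div // mulnC.
    rewrite (rsum_ext _ _ (fun k => ind (j <= Z)%N * ind (k * j <= X)%N * (Lambda k * mu j)) (fun k => (ind (j <= Z)%N * mu j) * (ind (k * j <= X)%N * Lambda k))); last by move=> k _; ring.
    rewrite -rsum_mull; field; lra.
  rewrite -rsumB -rsum_mull /S2 exchange_big /= /mj /Rdiv; ring.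
have H3 : psi y * Mmu (x / y) = S3.
  rewrite /psi /Mmu (sum_le_X y X) // (sum_le_X (x / y) X) // -/Y -/Z rsum_mulr /S3.
  apply: rsum_ext => k _.
  rewrite rsum_mull; apply: rsum_ext => j _; ring.
have Hm1 : m1 (x / y) = mj - Mmu (x / y) / (x / y).
  by rewrite /m1 /mmu (sum_le_X _ X).
have Hh : S = S1 + S2 - S3.
  rewrite /S /S1 /S2 /S3 rsumDB; apply: rsum_ext => k; rewrite mem_iota => /andP[k0 _].
  rewrite rsumDB; apply: rsum_ext => j; rewrite mem_iota => /andP[j0 _].
  have h := hyp x y k j hy1 hyx k0 j0.
  rewrite -/X -/Y -/Z in h.
  rewrite {1}h; ring.

rewrite H1 H2 Hm1.
have -> : Nmu x = - S by lra.
rewrite Hh -H3.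
field; lra.
Qed.
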